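(* Let $\mathbb{F}$ be a field, $A$ and $B$ finite-dimensional $\mathbb{F}$-spaces with $\dim A=n$, $\dim B=j$, $V=A\otimes_{\mathbb{F}}B$, and let $g\in\mathrm{GL}(A)$ with $\delta_A(g)=k$. Then: (i) $d_V(g\otimes s)\le kj$ for all $s\in\mathrm{GL}(B)$. (ii) If $k\ge n/2$, then $d_V(g\otimes s)\le k(j-2)+n$ for all but at most one $s\in\mathrm{GL}(B)$. (iii) If $g\notin\mathbf{Z}(\mathrm{GL}(A))$ and $j\ge2$, then $d_V(g\otimes s)\le(n-1)(j-1)+1$ for all but at most one $s\in\mathrm{GL}(B)$, and $d_V(g\otimes s)\le(n-1)j$ for all $s\in\mathrm{GL}(B)$.
   Context: For a finite-dimensional $\mathbb{F}$-space $U$ and $x\in\mathrm{GL}(U)$, $d_U(x)=\dim_{\mathbb{F}}\mathrm{Ker}(x-1_U)$, and $\delta_U(x)$ is the largest dimension of an eigenspace of $x$ on $U\otimes_{\mathbb{F}}\overline{\mathbb{F}}$. *)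

(* Defs.v *)
From HB Require Import structures.
From mathcomp Require Import all_boot all_order all_algebra all_fingroup all_character.
Set Implicit Arguments. Unset Strict Implicit. Unset Printing Implicit Defensive.
Import Order.TTheory GRing.Theory Num.Theory.
Local Open Scope ring_scope.

(* Linear maps of U = F^n are n x n matrices (row-vector convention);
   GL(U) = invertible matrices (x \in unitmx). *)

Definition dfix (F : fieldType) (n : nat) (x : 'M[F]_n) : nat :=
  \rank (kermx (x - 1%:M)).

Definition eigdim (L : fieldType) (n : nat) (x : 'M[L]_n) (l : L) : nat :=
  \rank (kermx (x - l%:M)).

(* delta_U(x) = k : the largest dimension of an eigenspace of x on U (x) L,
   where L is an algebraically closed field containing F via f. *)
Definition is_delta (F : fieldType) (L : closedFieldType) (f : {rmorphism F -> L})
  (n : nat) (x : 'M[F]_n) (k : nat) : Prop :=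
  (exists l : L, eigdim (map_mx f x) l = k) /\
  (forall l : L, (eigdim (map_mx f x) l <= k)%N).

Definition central_GL (F : fieldType) (n : nat) (x : 'M[F]_n) : Prop :=
  forall h : 'M[F]_n, h \in unitmx -> x *m h = h *m x.

(* Main.v *)
Require Import Defs.
From HB Require Import structures.
From mathcomp Require Import all_boot all_order all_algebra all_fingroup all_character.
From mathcomp Require Import zify ring.
From Stdlib Require Import Classical.
Import Order.TTheory GRing.Theory Num.Theory.
Local Open Scope ring_scope.
Lemma val_enum_rank (T : finType) (x : T) : val (enum_rank x) = index x (enum T).
Proof.
rewrite -{2}(nth_enum_rank x x) index_uniq ?enum_uniq //.
by rewrite -cardE ltn_ord.
Qed.
Lemma enum_prodE (T1 T2 : finType) : enum {: T1 * T2} = [seq (x1, x2) | x1 <- enum T1, x2 <- enum T2].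
Proof. by rewrite [LHS]enumT unlock. Qed.
Lemma index_allpairs_ord m n (i : 'I_m) (j : 'I_n) :
  index (i, j) [seq (x1, x2) | x1 <- enum 'I_m, x2 <- enum 'I_n] = (i * n + j)%N.
Proof.
rewrite -[in RHS](index_enum_ord i) -[in RHS](index_enum_ord j).
have : i \in enum 'I_m by rewrite mem_enum.
have : j \in enum 'I_n by rewrite mem_enum.
have := size_enum_ord n.
elim: (enum 'I_m) => [//|x s IH] /= Hsz Hj Hi.
rewrite index_cat.
case: eqP => [->|ne].
  rewrite mem_map ?Hj; last by move=> y y' [].
  by rewrite (index_map (fun y y' (E : (i,y) = (i,y')) => congr1 snd E)).
rewrite ifF; last first.
  apply/negP => /mapP [y _ [E _]]; exact: ne (esym E).
rewrite size_map Hsz IH //; last by move: Hi; rewrite inE => /orP [/eqP E|//]; case: ne.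
by rewrite mulSn addnA.
Qed.
Lemma mxvec_index_val {m n} (i : 'I_m) (j : 'I_n) : nat_of_ord (mxvec_index i j) = (i * n + j)%N.
Proof.
by rewrite /mxvec_index /= val_enum_rank enum_prodE index_allpairs_ord.
Qed.

Lemma mxvec_index_l m n (j : 'I_n) :
  @mxvec_index m.+1 n (lshift m (ord0 : 'I_1)) j = lshift (m * n) j :> 'I_(m.+1 * n).
Proof. apply: ord_inj; have h := @mxvec_index_val m.+1 n (lshift m (ord0 : 'I_1)) j; exact: h. Qed.

Lemma mxvec_index_r m n (i : 'I_m) (j : 'I_n) :
  @mxvec_index m.+1 n (rshift 1 i) j = rshift n (mxvec_index i j) :> 'I_(m.+1 * n).
Proof.
apply: ord_inj; apply: (etrans (@mxvec_index_val _ _ (rshift 1 i) j)).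
rewrite /=; apply: esym; apply: (etrans (f_equal (addn n) (@mxvec_index_val _ _ i j))).
by rewrite mulSn addnA.
Qed.

Section T.
Variable F : fieldType.
Lemma trowE n1 (u : 'rV[F]_n1) m2 n2 (B : 'M[F]_(m2, n2)) i2 j1 j2 :
  trow u B i2 (mxvec_index j1 j2) = u 0 j1 * B i2 j2.
Proof.
elim: n1 u j1 => [|n1 IH] u j1; first by case: j1.
rewrite /=.
case: (split_ordP (j1 : 'I_(1 + n1))) => k ->.
  by rewrite (ord1 k) mxvec_index_l row_mxEl !mxE.
rewrite mxvec_index_r. apply: etrans (row_mxEr _ _ _ _) _. by rewrite IH mxE.
Qed.
Lemma tprod_entry m1 n1 (A : 'M[F]_(m1, n1)) m2 n2 (B : 'M[F]_(m2, n2)) i1 i2 j1 j2 :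
  tprod A B (mxvec_index i1 i2) (mxvec_index j1 j2) = A i1 j1 * B i2 j2.
Proof.
elim: m1 A i1 => [|m1 IH] A i1; first by case: i1.
rewrite /=.
case: (split_ordP (i1 : 'I_(1 + m1))) => k ->.
  rewrite (ord1 k) mxvec_index_l. apply: etrans (col_mxEu _ _ _ _) _.
  by rewrite trowE !mxE.
rewrite mxvec_index_r. apply: etrans (col_mxEd _ _ _ _) _.
by rewrite IH mxE.
Qed.
Lemma mxvec_tprod m1 n1 m2 n2 (A : 'M[F]_(m1, n1)) (B : 'M[F]_(m2, n2)) (X : 'M[F]_(m1, m2)) :
  mxvec X *m tprod A B = mxvec (A^T *m X *m B).
Proof.
apply/rowP => q; case/mxvec_indexP: q => j1 j2.
rewrite mxvecE !mxE (reindex _ (curry_mxvec_bij _ _)) /=.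
transitivity (\sum_(i1 < m1) \sum_(i2 < m2) X i1 i2 * (A i1 j1 * B i2 j2)).
  by rewrite pair_big /=; apply: eq_bigr => [[i1 i2]] _ /=; rewrite mxvecE tprod_entry.
rewrite exchange_big /=; apply: eq_bigr => i2 _.
rewrite !mxE big_distrl /=; apply: eq_bigr => i1 _.
by rewrite !mxE mulrA [X i1 i2 * _]mulrC.
Qed.
End T.

Set Implicit Arguments. Unset Strict Implicit. Unset Printing Implicit Defensive.
Section Contr.
Variable R : fieldType.
Variables n j : nat.

Definition contr m (U : 'M[R]_(m, j)) (w : 'rV[R]_(n * j)) : 'rV[R]_(n * m) :=
  mxvec ((vec_mx w : 'M_(n, j)) *m U^T).

Lemma contr_is_linear m (U : 'M[R]_(m, j)) : linear (contr U).
Proof.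
by move=> a x y; rewrite /contr linearP /= mulmxDl -scalemxAl linearP.
Qed.

HB.instance Definition _ m (U : 'M[R]_(m, j)) :=
  GRing.isSemilinear.Build _ _ _ _ (contr U)
    (GRing.semilinear_linear (contr_is_linear U)).

Definition evc (u : 'rV[R]_j) (w : 'rV[R]_(n * j)) : 'rV[R]_n :=
  ((vec_mx w : 'M_(n, j)) *m u^T)^T.

Lemma evc_is_linear u : linear (evc u).
Proof.
by move=> a x y; rewrite /evc linearP /= mulmxDl -scalemxAl linearP.
Qed.

HB.instance Definition _ u :=
  GRing.isSemilinear.Build _ _ _ _ (evc u)
    (GRing.semilinear_linear (evc_is_linear u)).

Lemma mul_contr m (U : 'M[R]_(m, j)) w : w *m lin1_mx (contr U) = contr U w.
Proof. exact: mul_rV_lin1. Qed.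
Lemma mul_evc u w : w *m lin1_mx (evc u) = evc u w.
Proof. exact: mul_rV_lin1. Qed.
End Contr.

Section Core.
Variable L : closedFieldType.
Variables n j : nat.
Variables (G : 'M[L]_n) (S : 'M[L]_j).
Hypothesis HS : S \in unitmx.

Let c := (invmx S)^T.
Definition Wsp := kermx (tprod G S - 1%:M).
Definition WU m (U : 'M[L]_(m, j)) := (Wsp :&: kermx (lin1_mx (@contr L n j m U)))%MS.

Lemma memW w : (w <= Wsp)%MS = (G^T *m (vec_mx w : 'M_(n, j)) *m S == vec_mx w).
Proof.
rewrite sub_kermx mulmxBr mulmx1 -{1}[w]vec_mxK mxvec_tprod subr_eq0.
by rewrite -{2}[w]vec_mxK (inj_eq (can_inj mxvecK)).
Qed.

Lemma memW_c w : (w <= Wsp)%MS -> G^T *m (vec_mx w : 'M_(n, j)) = vec_mx w *m c^T.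
Proof.
rewrite memW => /eqP {2}<-; by rewrite trmxK mulmxK.
Qed.

Lemma memWU m (U : 'M[L]_(m, j)) w :
  (w <= WU U)%MS = (w <= Wsp)%MS && ((vec_mx w : 'M_(n, j)) *m U^T == 0).
Proof. by rewrite sub_capmx sub_kermx mul_contr /contr mxvec_eq0. Qed.


Lemma WU_sub m (U : 'M[L]_(m, j)) : (WU U <= Wsp)%MS.
Proof. exact: capmxSl. Qed.

Lemma step m (U : 'M[L]_(m, j)) (u : 'rV[L]_j) (nu : L) :
  (u *m (c - nu%:M) <= U)%MS ->
  (\rank (WU U) <= eigdim G nu + \rank (WU (col_mx U u)))%N.
Proof.
move=> hu; rewrite -(mxrank_mul_ker (WU U) (lin1_mx (@evc L n j u))).
apply: leq_add; apply: mxrankS.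
  apply/row_subP => i; rewrite row_mul mul_evc sub_kermx.
  have := row_sub i (WU U); rewrite memWU => /andP [hW /eqP hU].
  set X := (vec_mx (row i (WU U)) : 'M_(n, j)).
  have hG := memW_c hW; rewrite -/X in hG.
  rewrite /evc -/X -[G - _]trmxK -trmx_mul linearB /= tr_scalar_mx mulmxBl mulmxA hG.
  rewrite mul_scalar_mx.
  have e : c^T *m u^T - nu *: u^T = (u *m (c - nu%:M))^T.
    rewrite mulmxBr mul_mx_scalar raddfB /= trmx_mul; congr (_ - _); by apply/matrixP => a b; rewrite !mxE.
  rewrite -mulmxA scalemxAr -mulmxBr e.
  case/submxP: hu => D hD. by rewrite hD [(D *m U)^T]trmx_mul mulmxA hU mul0mx trmx0.
apply/row_subP => i.
have := row_sub i (WU U :&: kermx (lin1_mx (@evc L n j u)))%MS.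
rewrite sub_capmx memWU sub_kermx mul_evc => /andP [/andP [hW /eqP hU] /eqP hu0].
rewrite memWU hW /= tr_col_mx mul_mx_row hU.
move: hu0; rewrite /evc => /eqP; rewrite trmx_eq0 => /eqP ->.
by rewrite row_mx0.
Qed.

Lemma WU_full m (U : 'M[L]_(m, j)) : \rank U = j -> \rank (WU U) = 0%N.
Proof.
move=> hr; apply/eqP; rewrite mxrank_eq0; apply/rowV0P => v.
rewrite memWU => /andP [_ /eqP h].
have hf : row_free U^T by rewrite /row_free mxrank_tr hr.
apply: (can_inj vec_mxK); rewrite linear0.
by apply: (row_free_inj hf); rewrite h mul0mx.
Qed.

Lemma ltmx_col m1 (A : 'M[L]_(m1, j)) (v : 'rV_j) :
  ~~ (v <= A)%MS -> (\rank A < \rank (col_mx A v))%N.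
Proof.
move=> hv; apply: rank_ltmx; rewrite ltmxE col_mx_sub submx_refl (negbTE hv) /= andbT.
by rewrite -addsmxE addsmxSl.
Qed.

Lemma exists_step_gen (j' : nat) (c0 : 'M[L]_j'.+1) m (U : 'M[L]_(m, j'.+1)) :
  forall (rs : seq L) (v : 'rV_j'.+1), ~~ (v <= U)%MS ->
  (v *m \prod_(z <- rs) (c0 - z%:M) <= U)%MS ->
  exists (u : 'rV_j'.+1) (nu : L), ~~ (u <= U)%MS /\ (u *m (c0 - nu%:M) <= U)%MS.
Proof.
elim=> [|z rs IH] v hv.
  by rewrite big_nil mulmx1 (negbTE hv).
rewrite big_cons -mulmxE mulmxA => h.
have [hz|hz] := boolP (v *m (c0 - z%:M) <= U)%MS.
  by exists v, z.
exact: IH hz h.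
Qed.

Lemma exists_step (j' : nat) (c0 : 'M[L]_j'.+1) m (U : 'M[L]_(m, j'.+1)) :
  (\rank U < j'.+1)%N ->
  exists (u : 'rV_j'.+1) (nu : L), ~~ (u <= U)%MS /\ (u *m (c0 - nu%:M) <= U)%MS.
Proof.
move=> hr.
have [v hv] : exists v : 'rV_j'.+1, ~~ (v <= U)%MS.
  have h1 : ~~ (1%:M <= U)%MS.
    by apply: contraL hr => /mxrankS; rewrite mxrank1 -leqNgt.
  have [i hi] := row_subPn h1; by exists (row i 1%:M).
have [rs hrs] := closed_field_poly_normal (char_poly c0).
have hm := char_poly_monic c0; move/monicP: hm => hm.
rewrite hm scale1r in hrs.
have h0 : \prod_(z <- rs) (c0 - z%:M) = 0.
  rewrite -(Cayley_Hamilton c0) hrs rmorph_prod; apply: eq_bigr => z _.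
  by rewrite rmorphB /= horner_mx_X horner_mx_C.
apply: (exists_step_gen hv (rs := rs)).
by rewrite h0 mulmx0 sub0mx.
Qed.

Lemma exists_step' (j0 : nat) (c0 : 'M[L]_j0) m (U : 'M[L]_(m, j0)) :
  (\rank U < j0)%N ->
  exists (u : 'rV_j0) (nu : L), ~~ (u <= U)%MS /\ (u *m (c0 - nu%:M) <= U)%MS.
Proof. by case: j0 c0 U => [//|j'] c0 U; exact: exists_step. Qed.

Lemma col_subl m1 m2 n0 (A : 'M[L]_(m1, n0)) (B : 'M[L]_(m2, n0)) : (A <= col_mx A B)%MS.
Proof. by rewrite -addsmxE addsmxSl. Qed.
Lemma col_subr m1 m2 n0 (A : 'M[L]_(m1, n0)) (B : 'M[L]_(m2, n0)) : (B <= col_mx A B)%MS.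
Proof. by rewrite -addsmxE addsmxSr. Qed.

Lemma stable_bound K
  (HK : forall m (U : 'M[L]_(m, j)) (u : 'rV_j) nu, ~~ (u <= U)%MS ->
          (u *m (c - nu%:M) <= U)%MS -> (eigdim G nu <= K)%N) :
  forall d m (U : 'M[L]_(m, j)), stablemx U c -> (j - \rank U <= d)%N ->
  (\rank (WU U) <= K * (j - \rank U))%N.
Proof.
elim=> [|d IH] m U hs hd.
  have hr : \rank U = j by apply/eqP; rewrite eqn_leq rank_leq_col -subn_eq0 -leqn0.
  by rewrite WU_full.
case: (ltnP (\rank U) j) => hr; last first.
  have hr' : \rank U = j by apply/eqP; rewrite eqn_leq rank_leq_col hr.
  by rewrite WU_full.
have [u [nu [hu hun]]] := exists_step' c hr.
have hst := step hun.
have hs' : stablemx (col_mx U u) c.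
  rewrite mul_col_mx col_mx_sub (submx_trans hs (col_subl _ _)) /=.
  have -> : u *m c = u *m (c - nu%:M) + nu *: u by rewrite mulmxBr mul_mx_scalar subrK.
  apply: addmx_sub; first exact: submx_trans hun (col_subl _ _).
  exact/scalemx_sub/col_subr.
have hlt := ltmx_col hu.
have hr' := rank_leq_col (col_mx U u).
have := IH _ _ hs'; rewrite -/(WU _).
have hK := HK _ _ _ _ hu hun.
move=> /(_ _) h; have {}h := h ltac:(lia).
apply: leq_trans hst _.
nia.
Qed.

Lemma W_bound K
  (HK : forall m (U : 'M[L]_(m, j)) (u : 'rV_j) nu, ~~ (u <= U)%MS ->
          (u *m (c - nu%:M) <= U)%MS -> (eigdim G nu <= K)%N) :
  (\rank Wsp <= K * j)%N.
Proof.
have h := stable_bound HK (d := j) (U := 0 : 'M_(1, j)).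
rewrite mxrank0 subn0 mul0mx sub0mx leqnn in h.
apply: leq_trans (h isT isT); apply: mxrankS.
apply/row_subP => i; rewrite memWU row_sub /=.
by rewrite trmx0 mulmx0.
Qed.

Lemma scalar_bound mu : c = mu%:M -> (\rank Wsp <= eigdim G mu * j)%N.
Proof.
move=> hc; apply: W_bound => m U u nu hu; rewrite hc.
have -> : u *m (mu%:M - nu%:M) = (mu - nu) *: u.
  by rewrite mulmxBr !mul_mx_scalar scalerBl.
have [->|hne] := eqVneq mu nu; first by [].
move=> h; exfalso; move/negP: hu; apply.
have hne' : mu - nu != 0 by rewrite subr_eq0.
by rewrite -(scalerK hne' u); apply: scalemx_sub.
Qed.

Lemma nonscalar_vec (j0 : nat) (c0 : 'M[L]_j0) : (forall mu : L, c0 != mu%:M) ->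
  exists (u : 'rV_j0) (mu nu : L),
    [/\ ~~ (u <= kermx (c0 - mu%:M))%MS,
        (u *m (c0 - nu%:M) <= kermx (c0 - mu%:M))%MS &
        u *m (c0 - nu%:M) != 0].
Proof.
move=> hns.
have hj : (0 < j0)%N.
  case: j0 c0 hns => [|//] c0 hns; exfalso.
  by move: (hns 0); rewrite [c0]flatmx0 [0%:M]flatmx0 eqxx.
have [u1 [mu [hu1 hmu]]] := exists_step' c0 (U := 0 : 'M_j0) ltac:(by rewrite mxrank0).
rewrite submx0 in hmu; rewrite submx0 in hu1.
have hne0 : c0 - mu%:M != 0 by rewrite subr_eq0.
set E := kermx (c0 - mu%:M).
have hE : (\rank E < j0)%N.
  rewrite /E mxrank_ker.
  have : \rank (c0 - mu%:M) != 0%N by rewrite mxrank_eq0.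
  lia.
have [w [nu [hw hx]]] := exists_step' c0 hE.
have [hx0|hx0] := eqVneq (w *m (c0 - nu%:M)) 0; last by exists w, mu, nu.
have hu1E : (u1 <= E)%MS by rewrite sub_kermx hmu.
have hne : mu != nu.
  apply/negP => /eqP hmn; move/negP: hw; apply.
  by rewrite sub_kermx hmn hx0.
exists (u1 + w), mu, nu.
have e : (u1 + w) *m (c0 - nu%:M) = (mu - nu) *: u1.
  rewrite mulmxDl hx0 addr0 mulmxBr mul_mx_scalar scalerBl.
  by move/eqP: hmu; rewrite mulmxBr mul_mx_scalar => /eqP; rewrite subr_eq0 => /eqP ->.
rewrite e; split.
- apply/negP => h; move/negP: hw; apply.
  rewrite -(addKr u1 w); apply: addmx_sub => //.
  by rewrite -scaleN1r; apply: scalemx_sub.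
- exact: scalemx_sub.
- by rewrite scaler_eq0 subr_eq0 negb_or hne.
Qed.

Lemma ns_bound K
  (HK : forall m (U : 'M[L]_(m, j)) (u : 'rV_j) nu, ~~ (u <= U)%MS ->
          (u *m (c - nu%:M) <= U)%MS -> (eigdim G nu <= K)%N) :
  (forall mu : L, c != mu%:M) -> (\rank Wsp <= n + K * (j - 2))%N.
Proof.
move=> hns.
have [u [mu [nu [huE hxE hx0]]]] := nonscalar_vec hns.
set x := u *m (c - nu%:M) in hxE hx0.
set E := kermx (c - mu%:M) in huE hxE.
set U2 := col_mx u (u *m c).
have hxU : (x <= U2)%MS.
  rewrite /x mulmxBr mul_mx_scalar; apply: addmx_sub; first exact: col_subr.
  by rewrite -scaleNr; apply/scalemx_sub/col_subl.
have hs : stablemx U2 c.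
  rewrite mul_col_mx col_mx_sub col_subr /=.
  have e : u *m c *m c = x *m (c - mu%:M) + (mu + nu) *: (u *m c) + (- (mu * nu)) *: u.
    rewrite /x !mulmxBr !mul_mx_scalar mulmxBl -scalemxAl.
    set A := u *m c *m c; set B := u *m c.
    by apply/rowP => k; rewrite !mxE; ring.
  have hx1 : x *m (c - mu%:M) = 0 by apply/eqP; rewrite -sub_kermx.
  rewrite e hx1 add0r; apply: addmx_sub; apply: scalemx_sub; [exact: col_subr | exact: col_subl].
have hr2 : (2 <= \rank U2)%N.
  have hsub : (col_mx x u <= U2)%MS by rewrite col_mx_sub hxU col_subl.
  apply: leq_trans (mxrankS hsub).
  have hxr : \rank x = 1%N by rewrite rank_rV hx0.
  have := @ltmx_col _ x u; rewrite hxr; apply.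
  by apply: contra huE => h; apply: submx_trans h hxE.
have h1 : (\rank Wsp <= n + \rank (WU U2))%N.
  rewrite -(mxrank_mul_ker Wsp (lin1_mx (@evc L n j u))).
  apply: leq_add; first exact: rank_leq_col.
  apply: mxrankS; apply/row_subP => i.
  have := row_sub i (Wsp :&: kermx (lin1_mx (@evc L n j u)))%MS.
  rewrite sub_capmx sub_kermx mul_evc => /andP [hW /eqP hu0].
  rewrite memWU hW /= tr_col_mx mul_mx_row.
  move: hu0; rewrite /evc => /eqP; rewrite trmx_eq0 => /eqP hu0.
  rewrite hu0 trmx_mul mulmxA -memW_c // -mulmxA hu0 mulmx0.
  by rewrite row_mx0.
have h2 := stable_bound HK (d := j) hs (leq_subr _ _).
apply: leq_trans h1 _; rewrite leq_add2l; apply: leq_trans h2 _.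
by apply: leq_mul => //; apply: leq_sub2l.
Qed.
End Core.

Lemma map_tprod (F : fieldType) (L : fieldType) (f : {rmorphism F -> L}) m1 n1 m2 n2
  (A : 'M[F]_(m1, n1)) (B : 'M[F]_(m2, n2)) :
  map_mx f (tprod A B) = tprod (map_mx f A) (map_mx f B).
Proof.
apply/matrixP => p q; case/mxvec_indexP: p => i1 i2; case/mxvec_indexP: q => j1 j2.
by rewrite mxE !tprod_entry rmorphM !mxE.
Qed.

Lemma dfix_map (F : fieldType) (L : closedFieldType) (f : {rmorphism F -> L}) n j
  (g : 'M[F]_n) (s : 'M[F]_j) :
  dfix (tprod g s) = \rank (Wsp (map_mx f g) (map_mx f s)).
Proof.
rewrite /dfix /Wsp !mxrank_ker -map_tprod -(map_mx1 f) -map_mxB.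
by rewrite mxrank_map.
Qed.

Lemma eig_distinct (L : fieldType) n (G : 'M[L]_n) mu1 mu2 : mu1 != mu2 ->
  (eigdim G mu1 + eigdim G mu2 <= n)%N.
Proof.
move=> hne; rewrite /eigdim -mxrank_disjoint_sum ?rank_leq_col //.
apply/eqP/rowV0P => v; rewrite sub_capmx !sub_kermx !mulmxBr !mul_mx_scalar.
rewrite !subr_eq0 => /andP [/eqP h1 /eqP h2].
have : (mu1 - mu2) *: v = 0 by rewrite scalerBl -h1 -h2 subrr.
by move/eqP; rewrite scaler_eq0 subr_eq0 (negbTE hne) => /eqP.
Qed.

Lemma eig_le (L : fieldType) n (G : 'M[L]_n) mu : (eigdim G mu <= n)%N.
Proof. exact: rank_leq_col. Qed.

Lemma facts (F : fieldType) (L : closedFieldType) (f : {rmorphism F -> L})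
  (n j k : nat) (g : 'M[F]_n) (hk : is_delta f g k) (s : 'M[F]_j) (hs : s \in unitmx) :
  [/\ (dfix (tprod g s) <= k * j)%N,
     (forall mu : L, (invmx (map_mx f s))^T != mu%:M) ->
        (dfix (tprod g s) <= n + k * (j - 2))%N &
     forall mu : L, (invmx (map_mx f s))^T = mu%:M ->
        (dfix (tprod g s) <= eigdim (map_mx f g) mu * j)%N].
Proof.
have hS : map_mx f s \in unitmx by rewrite map_unitmx.
have HK : forall m (U : 'M[L]_(m, j)) (u : 'rV_j) nu, ~~ (u <= U)%MS ->
   (u *m ((invmx (map_mx f s))^T - nu%:M) <= U)%MS -> (eigdim (map_mx f g) nu <= k)%N.
  by move=> *; apply: hk.2.
rewrite (dfix_map f); split.
- exact: (W_bound hS HK).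
- exact: (ns_bound hS HK).
- by move=> mu hmu; apply: (scalar_bound (map_mx f g) hS hmu).
Qed.

Lemma c_inj (F : fieldType) (L : closedFieldType) (f : {rmorphism F -> L}) j
  (s1 s2 : 'M[F]_j) : s1 \in unitmx -> s2 \in unitmx ->
  (invmx (map_mx f s1))^T = (invmx (map_mx f s2))^T -> s1 = s2.
Proof.
move=> h1 h2 /trmx_inj e.
apply: (map_mx_inj (f := f)).
by rewrite -(invmxK (map_mx f s1)) e invmxK.
Qed.

Lemma small_scalar (L : fieldType) j (c : 'M[L]_j) : (j <= 1)%N -> exists mu : L, c = mu%:M.
Proof.
case: j c => [|[|//]] c _.
  by exists 0; rewrite [c]flatmx0 [0%:M]flatmx0.
by exists (c 0 0); exact: mx11_scalar.
Qed.

Lemma small_central (F : fieldType) n (g : 'M[F]_n) : (n <= 1)%N -> central_GL g.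
Proof.
case: n g => [|[|//]] g _ h _.
  by rewrite [g *m h]flatmx0 [h *m g]flatmx0.
by rewrite [g]mx11_scalar scalar_mxC.
Qed.

Unset Implicit Arguments.
Theorem lemma9p2 (F : fieldType) (L : closedFieldType) (f : {rmorphism F -> L})
  (n j k : nat) (g : 'M[F]_n) (hg : g \in unitmx) (hk : is_delta f g k) :
  (* (i) *)
  (forall s : 'M[F]_j, s \in unitmx -> (dfix (tprod g s) <= k * j)%N) /\
  (* (ii) *)
  ((n <= 2 * k)%N ->
     forall s1 s2 : 'M[F]_j, s1 \in unitmx -> s2 \in unitmx ->
       ~ ((dfix (tprod g s1))%:Z <= k%:Z * (j%:Z - 2) + n%:Z) ->
       ~ ((dfix (tprod g s2))%:Z <= k%:Z * (j%:Z - 2) + n%:Z) ->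
       s1 = s2) /\
  (* (iii) *)
  (~ central_GL g -> (2 <= j)%N ->
     (forall s1 s2 : 'M[F]_j, s1 \in unitmx -> s2 \in unitmx ->
        ~ ((dfix (tprod g s1))%:Z <= (n%:Z - 1) * (j%:Z - 1) + 1) ->
        ~ ((dfix (tprod g s2))%:Z <= (n%:Z - 1) * (j%:Z - 1) + 1) ->
        s1 = s2) /\
     (forall s : 'M[F]_j, s \in unitmx ->
        (dfix (tprod g s))%:Z <= (n%:Z - 1) * j%:Z)).
Proof.
set G := map_mx f g.
have hkmax : forall l, (eigdim G l <= k)%N := hk.2.
have [l0 hl0] := hk.1.
have hkn : (k <= n)%N by rewrite -hl0 eig_le.
split.
  by move=> s hs; have [] := facts hk hs.
split.
  move=> h2k s1 s2 hs1 hs2 hb1 hb2.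
  have [hj0|hj0] := posnP j.
    by move: s1 s2 {hs1 hs2 hb1 hb2}; rewrite hj0 => s1 s2; rewrite [s1]flatmx0 [s2]flatmx0.
  have key : forall s : 'M[F]_j, s \in unitmx ->
      ~ ((dfix (tprod g s))%:Z <= k%:Z * (j%:Z - 2) + n%:Z) ->
      exists mu : L, (invmx (map_mx f s))^T = mu%:M /\ (n < eigdim G mu + k)%N.
    move=> s hs hb; have [hA hB hC] := facts hk hs.
    case: (classic (exists mu : L, (invmx (map_mx f s))^T = mu%:M)) => [[mu hmu]|hns].
      exists mu; split => //.
      have h1 := hC mu hmu; have h2 := hkmax mu.
      rewrite -/G in h1.
      rewrite ltnNge; apply/negP => h3; apply: hb.
      nia.
    have hj2 : (2 <= j)%N.
      rewrite leqNgt; apply/negP => hj1.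
      by apply: hns; apply: small_scalar; rewrite -ltnS.
    have h1 : (dfix (tprod g s) <= n + k * (j - 2))%N.
      by apply: hB => mu; apply/negP => /eqP e; apply: hns; exists mu.
    exfalso; apply: hb; nia.
  have [mu1 [e1 h1]] := key _ hs1 hb1.
  have [mu2 [e2 h2]] := key _ hs2 hb2.
  have hmu : forall mu, (n < eigdim G mu + k)%N -> mu = l0.
    move=> mu h; apply/eqP; apply/negPn/negP => hne.
    have := eig_distinct G hne; rewrite hl0; lia.
  apply: (c_inj (f := f) hs1 hs2); by rewrite e1 e2 (hmu _ h1) (hmu _ h2).
move=> hnc hj2.
have hn2 : (2 <= n)%N.
  rewrite leqNgt; apply/negP => hn1; apply: hnc; apply: small_central.
  by rewrite -ltnS.
have hkn' : (k < n)%N.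
  rewrite ltn_neqAle hkn andbT; apply/negP => /eqP hkn2; apply: hnc.
  have hr : \rank (G - l0%:M) = 0%N.
    move: hl0; rewrite /eigdim mxrank_ker hkn2 => hl.
    by rewrite -(subKn (rank_leq_col (G - l0%:M))) hl subnn.
  move/eqP: hr; rewrite mxrank_eq0 subr_eq0 => /eqP hG.
  move=> h _; apply: (map_mx_inj (f := f)).
  by rewrite !map_mxM -/G hG scalar_mxC.
split.
  move=> s1 s2 hs1 hs2 hb1 hb2.
  have key : forall s : 'M[F]_j, s \in unitmx ->
      ~ ((dfix (tprod g s))%:Z <= (n%:Z - 1) * (j%:Z - 1) + 1) ->
      exists mu : L, (invmx (map_mx f s))^T = mu%:M /\
                     ((n - 1) * (j - 1) + 1 < eigdim G mu * j)%N.
    move=> s hs hb; have [hA hB hC] := facts hk hs.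
    case: (classic (exists mu : L, (invmx (map_mx f s))^T = mu%:M)) => [[mu hmu]|hns].
      exists mu; split => //.
      have h1 := hC mu hmu.
      rewrite -/G in h1.
      rewrite ltnNge; apply/negP => h3; apply: hb.
      nia.
    have h1 : (dfix (tprod g s) <= n + k * (j - 2))%N.
      by apply: hB => mu; apply/negP => /eqP e; apply: hns; exists mu.
    exfalso; apply: hb; nia.
  have [mu1 [e1 h1]] := key _ hs1 hb1.
  have [mu2 [e2 h2]] := key _ hs2 hb2.
  have [heq|hne] := eqVneq mu1 mu2.
    by apply: (c_inj (f := f) hs1 hs2); rewrite e1 e2 heq.
  have := eig_distinct G hne.
  nia.
move=> s hs; have [hA _ _] := facts hk hs.
nia.
Qed.
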